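(* Let $F$ and $\tau=\tau_F$ be as in the context, and let $\tau_{\mathbf n}:=\widehat\tau_{\mathbf n}$ be the coefficients of the $d$-fold Walsh series generating $\tau$. Let $\sum_{\mathbf n\in\mathbb N_0^d}\psi_{\mathbf n}W_{\mathbf n}$ be a $d$-fold Walsh series which converges to zero by rectangles (or by cubes) at every point of $\mathbb G^d\setminus F$, and suppose $\psi_{\mathbf n}=o(\tau_{\mathbf n})$ as $\max_jn^j\to\infty$, i.e. there is a function $\varepsilon(\mathbf n)\to0$ as $\max_jn^j\to\infty$ with $|\psi_{\mathbf n}|\le\varepsilon(\mathbf n)|\tau_{\mathbf n}|$. Then $\psi_{\mathbf n}=0$ for all $\mathbf n$.
   Context: Fix an integer $d\ge 2$. $\mathbb G$ is the dyadic group: sequences $g=(g_k)_{k\ge0}$, $g_k\in\{0,1\}$, with coordinatewise addition mod 2 ($\oplus$) and product topology; $\mathbb G^d$ its $d$-th power, $\mu$ the normalized Haar measure. For $n\in\mathbb N_0$, $n=\sum_kn_k2^k$, $n_k\in\{0,1\}$. Dyadic interval of rank $k$: $\Delta^{(k)}_m=\{g: g_t=m_{k-1-t},\ 0\le t<k\}$; dyadic cube $\Delta^{(k)}_{\mathbf m}=\prod_l\Delta^{(k)}_{m^l}$, $\mathbf m\in\{0,\dots,2^k-1\}^d$. Vector order coordinatewise, $\mathbf 1=(1,\dots,1)$. Walsh functions $W_n(g)=\prod_k(-1)^{g_kn_k}$, $W_{\mathbf n}(\mathbf g)=\prod_lW_{n^l}(g^l)$; $W^{(k)}_{\mathbf n\mathbf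 m}$ is the constant value of $W_{\mathbf n}$ on $\Delta^{(k)}_{\mathbf m}$ ($\mathbf n,\mathbf m<2^k\mathbf 1$); $R_{k\mathbf 1}:=W_{2^k\mathbf 1}$. Partial sums of $\sum a_{\mathbf n}W_{\mathbf n}$: $S_{\mathbf N}=\sum_{\mathbf n<\mathbf N}a_{\mathbf n}W_{\mathbf n}$; convergence by rectangles means $S_{\mathbf N}(\mathbf g)\to S$ as $\min_jN^j\to\infty$, by cubes means $S_{N\mathbf 1}(\mathbf g)\to S$ as $N\to\infty$. Quasimeasure: $\tau$ on dyadic cubes with $\tau(\Delta^{(k)}_{\mathbf m})=\sum_{\boldsymbol\sigma\in\{0,1\}^d}\tau(\Delta^{(k+1)}_{2\mathbf m+\boldsymbol\sigma})$; $\widehat\tau_{\mathbf n}=\sum_{\mathbf m<2^k\mathbf 1}W^{(k)}_{\mathbf n\mathbf m}\tau(\Delta^{(k)}_{\mathbf m})$ for $\mathbf n<2^k\mathbf 1$; the series $\sum\widehat\tau_{\mathbf n}W_{\mathbf n}$ generates $\tau$. For nonempty closed $E$, $\tau_E$ is the unique nonnegative quasimeasure with $\tau_E(\mathbb G^d)=1$, $\tau_E(\Delta)=0$ iff $\Delta\cap E=\emptyset$, which splits the value of any cube meeting $E$ equally among those of its $2^d$ children meeting $E$. The set $F$: $m_1=0$, $m_{s+1}=2(2m_s+1)$; $F_s=\bigcup_{\mathbf m,\mathbf m'<2^{m_s}\mathbf 1}\{\mathbf g\in\Delta^{(2m_s)}_{2^{m_s}\mathbf m+\mathbf m'}: R_{2m_s\mathbf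 1}(\mathbf g)=W^{(m_s)}_{\mathbf m\mathbf m'}\}$; $F=\bigcap_{s\ge1}F_s$. *)

(* Defs.v *)
From HB Require Import structures.
From mathcomp Require Import all_boot all_order all_algebra.
From mathcomp Require Import reals.
Set Implicit Arguments. Unset Strict Implicit. Unset Printing Implicit Defensive.
Import Order.TTheory GRing.Theory Num.Theory.
Local Open Scope ring_scope.

Section Dyadic.
Variables (R : realType) (d : nat).

(* A point of G^d: coordinate l, digit t. *)
Definition point := 'I_d -> nat -> bool.
Definition mindex := 'I_d -> nat.

Definition bit (x i : nat) : bool := odd (x %/ 2 ^ i).

(* d-dimensional Walsh function W_n(g) = prod_l prod_k (-1)^(g^l_k n^l_k);
   digits k >= n^l of n^l vanish, so the product over k < n^l suffices. *)
Definition walsh (n : mindex) (g : point) : R :=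
  \prod_(l < d) \prod_(t < n l) (-1) ^+ (g l t && bit (n l) t).

(* g belongs to the dyadic cube Delta^{(k)}_m: g^l_t = m^l_{k-1-t}, t < k *)
Definition in_cube (k : nat) (m : mindex) (g : point) : Prop :=
  forall (l : 'I_d) (t : nat), (t < k)%N -> g l t = bit (m l) (k.-1 - t).

Definition valid_index (k : nat) (m : mindex) : Prop :=
  forall l, (m l < 2 ^ k)%N.

(* W^{(k)}_{n m}: constant value of W_n on Delta^{(k)}_m (n, m < 2^k 1) *)
Definition walshk (k : nat) (n m : mindex) : R :=
  \prod_(l < d) \prod_(t < k) (-1) ^+ (bit (m l) (k.-1 - t) && bit (n l) t).

Definition rademacher (k : nat) (g : point) : R :=
  walsh (fun _ => 2 ^ k)%N g.

(* m_1 = 0, m_{s+1} = 2(2 m_s + 1); mseq s = m_{s+1} *)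
Fixpoint mseq (s : nat) : nat :=
  match s with 0 => 0 | s'.+1 => 2 * (2 * mseq s' + 1) end%N.

Definition setFs (s : nat) (g : point) : Prop :=
  exists m m' : mindex, valid_index (mseq s) m /\ valid_index (mseq s) m' /\
    in_cube (2 * mseq s) (fun l => 2 ^ mseq s * m l + m' l)%N g /\
    rademacher (2 * mseq s) g = walshk (mseq s) m m'.

Definition setF (g : point) : Prop := forall s, setFs s g.

Definition meets (E : point -> Prop) (k : nat) (m : mindex) : Prop :=
  exists g, in_cube k m g /\ E g.

(* tau (given on dyadic cubes, tau k m = tau(Delta^{(k)}_m)) is the
   quasimeasure tau_E described in the paper. *)
Definition is_tau_E (E : point -> Prop) (tau : nat -> mindex -> R) : Prop :=
  [/\ tau 0%N (fun _ => 0%N) = 1,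
      (forall k m, valid_index k m -> 0 <= tau k m),
      (forall k m, valid_index k m -> (tau k m = 0 <-> ~ meets E k m)),
      (forall k m, valid_index k m ->
         tau k m = \sum_(s : {ffun 'I_d -> bool})
                     tau k.+1 (fun l => 2 * m l + s l)%N) &
      (forall k m (s s' : {ffun 'I_d -> bool}), valid_index k m ->
         meets E k.+1 (fun l => 2 * m l + s l)%N ->
         meets E k.+1 (fun l => 2 * m l + s' l)%N ->
         tau k.+1 (fun l => 2 * m l + s l)%N =
         tau k.+1 (fun l => 2 * m l + s' l)%N)].

(* Fourier-Walsh coefficient hat tau_n, computed at rank k = max_j n^j
   (n^j < 2^{n^j} <= 2^k); independent of k for quasimeasures. *)
Definition tauhat (tau : nat -> mindex -> R) (n : mindex) : R :=
  let k := (\max_(j < d) n j)%N in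
  \sum_(m : {ffun 'I_d -> 'I_(2 ^ k)})
     walshk k n (fun l => val (m l)) * tau k (fun l => val (m l)).

Definition psum (psi : mindex -> R) (N : mindex) (g : point) : R :=
  \sum_(n : {ffun 'I_d -> 'I_(\max_(j < d) N j)%N} | [forall j, (n j < N j)%N])
     psi (fun l => val (n l)) * walsh (fun l => val (n l)) g.

Definition conv0_rect (psi : mindex -> R) (g : point) : Prop :=
  forall e : R, 0 < e -> exists M : nat, forall N : mindex,
    (forall j, (M <= N j)%N) -> `|psum psi N g| < e.

Definition conv0_cube (psi : mindex -> R) (g : point) : Prop :=
  forall e : R, 0 < e -> exists M : nat, forall N : nat,
    (M <= N)%N -> `|psum psi (fun _ => N) g| < e.

Definition vanish_at_infty (eps : mindex -> R) : Prop :=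
  forall e : R, 0 < e -> exists M : nat, forall n : mindex,
    (M <= \max_(j < d) n j)%N -> `|eps n| < e.

End Dyadic.

(* Main.v *)
Require Import Defs.
From HB Require Import structures.
From mathcomp Require Import all_boot all_order all_algebra.
From mathcomp Require Import reals.
From mathcomp Require Import zify ring lra.
From Stdlib Require Import FunctionalExtensionality Classical.
Set Implicit Arguments. Unset Strict Implicit. Unset Printing Implicit Defensive.
Import Order.TTheory GRing.Theory Num.Theory.
Local Open Scope nat_scope.

Lemma bit0E x : bit x 0 = odd x.
Proof. by rewrite /bit expn0 divn1. Qed.

Lemma bitSE x i : bit x i.+1 = bit (x %/ 2) i.
Proof. by rewrite /bit expnS divnMA. Qed.

Lemma bit_2x0 x (b : bool) : bit (2 * x + b) 0 = b.
Proof. rewrite bit0E oddD oddM /=; by case: b. Qed.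

Lemma half_2x x (b : bool) : (2 * x + b) %/ 2 = x.
Proof. rewrite mulnC divnMDl // divn_small ?addn0 //; by case: b. Qed.

Lemma bit_2xS x (b : bool) i : bit (2 * x + b) i.+1 = bit x i.
Proof. by rewrite bitSE half_2x. Qed.

Lemma bit_small x t : (x < 2 ^ t)%N -> bit x t = false.
Proof. by move=> h; rewrite /bit divn_small. Qed.

Lemma bits_eq k : forall a b, (a < 2 ^ k)%N -> (b < 2 ^ k)%N ->
  (forall t, (t < k)%N -> bit a t = bit b t) -> a = b.
Proof.
elim: k => [|k IH] a b ha hb h.
  by move: ha hb; rewrite expn0 !ltnS !leqn0 => /eqP-> /eqP->.
rewrite (divn_eq a 2) (divn_eq b 2).
have h0 := h 0%N isT; rewrite !bit0E in h0.
rewrite !modn2 h0; congr (_ * _ + _)%N.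
apply: IH.
- by rewrite ltn_divLR // -expnSr.
- by rewrite ltn_divLR // -expnSr.
move=> t tk; have := h t.+1 tk; by rewrite !bitSE.
Qed.

Lemma bit_add_pow a K t : (a < 2 ^ K)%N -> (t <= K)%N ->
  bit (a + 2 ^ K) t = (t == K) || bit a t.
Proof.
move=> ha htK; rewrite /bit.
have -> : (2 ^ K = 2 ^ (K - t) * 2 ^ t)%N by rewrite -expnD subnK.
rewrite divnDMl ?expn_gt0 // oddD oddX /=.
case: (ltngtP t K) htK => // [tK|->] _.
  by rewrite subn_eq0 leqNgt tK /= addbF.
by rewrite subnn /= divn_small.
Qed.

Lemma subS_pred k t : (t < k)%N -> k - t = (k.-1 - t).+1.
Proof. lia. Qed.

Lemma bit_child x (b : bool) k t : (t < k.+1)%N ->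
  bit (2 * x + b) (k - t) = if t == k then b else bit x (k.-1 - t).
Proof.
move=> h; case: eqP => [->|ne]; first by rewrite subnn bit_2x0.
by rewrite subS_pred ?bit_2xS //; lia.
Qed.

Fixpoint idxn (k : nat) (f : nat -> bool) : nat :=
  match k with 0 => 0 | k'.+1 => 2 * idxn k' f + f k' end.

Lemma idxn_lt k f : idxn k f < 2 ^ k.
Proof.
elim: k => [|k IH] //=; rewrite expnS.
case: (f k) => /=; lia.
Qed.

Lemma bit_idxn k f t : t < k -> bit (idxn k f) (k.-1 - t) = f t.
Proof.
elim: k => [|k IH] // h /=.
rewrite bit_child //; case: eqP => [->//|ne]; apply: IH; lia.
Qed.

Lemma idxn_ext k f f' : (forall t, t < k -> f t = f' t) -> idxn k f = idxn k f'.
Proof.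
elim: k => [|k IH] //= h; rewrite IH ?h //; move=> t tk; apply: h; lia.
Qed.

Section Dig.
Variable d : nat.

Definition idx k (g : point d) : mindex d := fun l => idxn k (g l).

Lemma idx_valid k g : valid_index k (idx k g).
Proof. move=> l; exact: idxn_lt. Qed.

Lemma in_cube_idx k g : in_cube k (idx k g) g.
Proof. by move=> l t h; rewrite /idx bit_idxn. Qed.

Lemma in_cube_uniq k m g : valid_index k m -> in_cube k m g ->
  forall l, m l = idx k g l.
Proof.
move=> v c l; apply: (@bits_eq k) => //; first exact: idxn_lt.
move=> u uk.
have e : u = k.-1 - (k.-1 - u) by lia.
rewrite e -c; last by lia.
by rewrite /idx bit_idxn //; lia.
Qed.

Lemma in_cube_S k m (s : 'I_d -> bool) g :
  in_cube k.+1 (fun l => 2 * m l + s l) g <-> in_cube k m g /\ forall l, g l k = s l.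
Proof.
split.
  move=> c; split.
    move=> l t tk; rewrite (c l t) /=; last by lia.
    rewrite bit_child; last by lia.
    by case: eqP => // e; lia.
  by move=> l; rewrite (c l k) //= bit_child // eqxx.
case=> c e l t tk /=; rewrite bit_child //.
case: eqP => [->|ne]; first exact: e.
apply: c; lia.
Qed.

Lemma idx_ext k g g' : (forall l t, t < k -> g l t = g' l t) -> idx k g = idx k g'.
Proof.
move=> h; apply: functional_extensionality => l; apply: idxn_ext => t; exact: h.
Qed.

End Dig.

Lemma ch_lt k x (b : bool) : x < 2 ^ k -> 2 * x + b < 2 ^ k.+1.
Proof. rewrite expnS; case: b => /=; lia. Qed.

Lemma pow2_gt0 k : 0 < 2 ^ k.
Proof. by rewrite expn_gt0. Qed.

Local Open Scope ring_scope.

Section Ring.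
Variables (R : realType) (d : nat).

Definition Ix k := {ffun 'I_d -> 'I_(2 ^ k)}.
Definition mv k (m : Ix k) : mindex d := fun l => nat_of_ord (m l).
Definition ofm k (m : mindex d) : Ix k :=
  [ffun l => Ordinal (ltn_pmod (m l) (pow2_gt0 k))].
Definition ch (m : mindex d) (s : {ffun 'I_d -> bool}) : mindex d :=
  fun l => (2 * m l + s l)%N.
Definition par (s : {ffun 'I_d -> bool}) : R := \prod_l (-1) ^+ (s l).

Lemma mv_valid k (m : Ix k) : valid_index k (mv m).
Proof. by move=> l; rewrite /mv ltn_ord. Qed.

Lemma mv_ofm k m : valid_index k m -> mv (ofm k m) = m.
Proof.
move=> v; apply: functional_extensionality => l.
by rewrite /mv /ofm ffunE /= modn_small.
Qed.

Lemma ofm_mv k (m : Ix k) : ofm k (mv m) = m.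
Proof.
by apply/ffunP => l; apply: val_inj; rewrite /ofm ffunE /= modn_small // ltn_ord.
Qed.

Lemma ch_valid k m s : valid_index k m -> valid_index k.+1 (ch m s).
Proof. move=> v l; exact: ch_lt. Qed.

Lemma prod_ext_range n1 n2 (F : nat -> R) : (n1 <= n2)%N ->
  (forall i, (n1 <= i < n2)%N -> F i = 1) ->
  \prod_(i < n2) F i = \prod_(i < n1) F i.
Proof.
move=> le h; rewrite (big_ord_widen _ _ le) [RHS]big_mkcond /=.
apply: eq_bigr => i _; case: ifP => // /negbT; rewrite -leqNgt => hi.
by rewrite h // hi ltn_ord.
Qed.

Lemma prod_bit (x N : nat) (c : nat -> bool) : (x < 2 ^ N)%N ->
  \prod_(t < N) (-1) ^+ (c t && bit x t) = \prod_(t < x) (-1) ^+ (c t && bit x t) :> R.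
Proof.
move=> hx.
have hN : forall t, (N <= t)%N -> bit x t = false.
  move=> t ht; apply: bit_small; apply: (leq_trans hx); by rewrite leq_exp2l.
have hX : forall t, (x <= t)%N -> bit x t = false.
  move=> t ht; apply: bit_small; apply: (leq_trans (ltn_expl x (isT : 1 < 2)%N)).
  by rewrite leq_exp2l.
rewrite (@prod_ext_range (minn N x) N (fun t => (-1) ^+ (c t && bit x t))) ?geq_minl //; last first.
  move=> i /andP[h1 h2]; move: h1; rewrite geq_min => /orP[h|h].
    by rewrite hN ?andbF. by rewrite hX ?andbF.
rewrite [RHS](@prod_ext_range (minn N x) x (fun t => (-1) ^+ (c t && bit x t))) ?geq_minr //.
move=> i /andP[h1 h2]; move: h1; rewrite geq_min => /orP[h|h].
  by rewrite hN ?andbF. by rewrite hX ?andbF.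
Qed.

Lemma walsh_walshk k (n : mindex d) g : (forall l, n l < 2 ^ k)%N ->
  walsh R n g = walshk R k n (idx k g).
Proof.
move=> hn; rewrite /walsh /walshk; apply: eq_bigr => l _.
rewrite -(prod_bit (g l) (hn l)); apply: eq_bigr => t _.
by rewrite /idx bit_idxn.
Qed.

Lemma bit_pow k t : bit (2 ^ k) t = (t == k).
Proof.
case: (leqP t k) => h.
  by rewrite -(add0n (2 ^ k)%N) bit_add_pow ?expn_gt0 // /bit div0n orbF.
rewrite bit_small; last by rewrite ltn_exp2l.
by apply/esym/negbTE; rewrite neq_ltn h orbT.
Qed.

Lemma rademacherE k (g : point d) : rademacher R k g = \prod_l (-1) ^+ (g l k).
Proof.
rewrite /rademacher /walsh. apply: eq_bigr => l _.
have hk : (k.+1 <= 2 ^ k)%N by exact: ltn_expl.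
rewrite (@prod_ext_range k.+1 (2 ^ k) (fun t => (-1) ^+ (g l t && bit (2 ^ k) t)) hk); last first.
  by move=> i /andP[h1 h2]; rewrite bit_pow (gtn_eqF h1) andbF.
rewrite big_ord_recr big1.
  by rewrite bit_pow eqxx andbT /= mul1r.
by move=> i _; rewrite bit_pow (ltn_eqF (ltn_ord i)) andbF.
Qed.

Lemma walshk_child k (n m : mindex d) (s : 'I_d -> bool) :
  walshk R k.+1 n (fun l => 2 * m l + s l)%N =
  walshk R k n m * \prod_l (-1) ^+ (s l && bit (n l) k).
Proof.
rewrite /walshk -big_split /=; apply: eq_bigr => l _.
rewrite big_ord_recr /= subnn bit_2x0; congr (_ * _).
apply: eq_bigr => t _; rewrite subS_pred // bit_2xS; congr (_ ^+ (_ && _)).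
Qed.

Lemma walshk_sq k (n m : mindex d) : walshk R k n m ^+ 2 = 1.
Proof.
rewrite /walshk -prodrXl big1 // => l _; rewrite -prodrXl big1 // => t _.
exact: sqrr_sign.
Qed.

Lemma walshk_norm k (n m : mindex d) : `|walshk R k n m| = 1.
Proof.
rewrite /walshk normr_prod big1 // => l _; rewrite normr_prod big1 // => t _.
exact: normr_sign.
Qed.

Lemma par_sq s : par s ^+ 2 = 1.
Proof. by rewrite /par -prodrXl big1 // => l _; exact: sqrr_sign. Qed.

Lemma rad_sq k (g : point d) : rademacher R k g ^+ 2 = 1.
Proof. by rewrite rademacherE -prodrXl big1 // => l _; exact: sqrr_sign. Qed.

Lemma sum_child k (f : mindex d -> R) :
  \sum_(m : Ix k.+1) f (mv m) = \sum_(m : Ix k) \sum_(s : {ffun 'I_d -> bool}) f (ch (mv m) s).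
Proof.
rewrite pair_big /=.
pose h := fun p : Ix k * {ffun 'I_d -> bool} => ofm k.+1 (ch (mv p.1) p.2).
pose hi := fun m : Ix k.+1 => (ofm k (fun l => mv m l %/ 2)%N, [ffun l => odd (mv m l)]).
rewrite (reindex h) /=; last first.
  exists hi => [[a b] _|m _].
    rewrite /h /hi /= mv_ofm; last by apply: ch_valid; exact: mv_valid.
    congr (_, _).
      rewrite (_ : (fun l => ch (mv a) b l %/ 2)%N = mv a) ?ofm_mv //.
      by apply: functional_extensionality => l; rewrite /ch half_2x.
    by apply/ffunP => l; rewrite ffunE /ch oddD oddM /=; case: (b l).
  rewrite /h /hi /= mv_ofm; last first.
    by move=> l; rewrite ltn_divLR // -expnSr; exact: mv_valid.
  rewrite (_ : ch _ _ = mv m) ?ofm_mv //.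
  apply: functional_extensionality => l; rewrite /ch ffunE.
  by rewrite [in RHS](divn_eq (mv m l) 2) modn2 mulnC.
apply: eq_bigr => p _; rewrite /h mv_ofm //; apply: ch_valid; exact: mv_valid.
Qed.


Lemma sum_double n (F : nat -> R) :
  \sum_(x < 2 * n) F x = \sum_(y < n) (F (2 * y)%N + F (2 * y + 1)%N).
Proof.
elim: n => [|n IH]; first by rewrite muln0 !big_ord0.
rewrite (_ : (2 * n.+1 = (2 * n).+1.+1)%N); last by lia.
rewrite !big_ord_recr /= IH -addrA; congr (_ + (_ + _)); congr F; lia.
Qed.

Lemma sum_pow2S k (F : nat -> R) :
  \sum_(x < 2 ^ k.+1) F x = \sum_(y < 2 ^ k) (F (2 * y + false)%N + F (2 * y + true)%N).
Proof. by rewrite expnS sum_double; apply: eq_bigr => y _; rewrite addn0. Qed.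

Lemma L1r k (h : nat -> bool) :
  \sum_(x < 2 ^ k) \prod_(t < k) (-1) ^+ (bit x (k.-1 - t) && h t)
  = \prod_(t < k) (if h t then 0 else 2) :> R.
Proof.
elim: k h => [|k IH] h; first by rewrite expn0 big_ord1 !big_ord0.
rewrite (sum_pow2S k (fun x => \prod_(t < k.+1) (-1) ^+ (bit x (k.+1.-1 - t) && h t))).
have E : forall (y : nat) (b : bool), \prod_(t < k.+1) (-1) ^+ (bit (2 * y + b) (k.+1.-1 - t) && h t)
   = (\prod_(t < k) (-1) ^+ (bit y (k.-1 - t) && h t)) * (-1) ^+ (b && h k) :> R.
  move=> y b; rewrite big_ord_recr /= bit_child // eqxx; congr (_ * _).
  by apply: eq_bigr => t _; rewrite bit_child ?(ltn_eqF (ltn_ord t)) // ltnW // ltnS ltn_ord.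
under eq_bigr do rewrite !E -mulrDr.
rewrite -big_distrl /= IH [RHS]big_ord_recr /=; congr (_ * _).
by case: (h k) => /=; rewrite ?expr0 ?expr1 ?addrN.
Qed.

Lemma L1f k (h : nat -> bool) :
  \sum_(x < 2 ^ k) \prod_(t < k) (-1) ^+ (h t && bit x t)
  = \prod_(t < k) (if h t then 0 else 2) :> R.
Proof.
elim: k h => [|k IH] h; first by rewrite expn0 big_ord1 !big_ord0.
rewrite (sum_pow2S k (fun x => \prod_(t < k.+1) (-1) ^+ (h t && bit x t))).
have E : forall (y : nat) (b : bool), \prod_(t < k.+1) (-1) ^+ (h t && bit (2 * y + b) t)
   = (-1) ^+ (h 0%N && b) * (\prod_(t < k) (-1) ^+ (h t.+1 && bit y t)) :> R.
  move=> y b; rewrite big_ord_recl /= bit_2x0; congr (_ * _).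
  by apply: eq_bigr => t _; rewrite /bump /= add1n bit_2xS.
under eq_bigr do rewrite !E -mulrDl.
rewrite -big_distrr /= (IH (fun t => h t.+1)) [RHS]big_ord_recl /=; congr (_ * _).
by case: (h 0%N) => /=; rewrite ?expr0 ?expr1 ?addrN.
Qed.

Lemma prod_if_all k (h : nat -> bool) : (forall t, (t < k)%N -> h t = false) ->
  \prod_(t < k) (if h t then 0 else 2) = (2 ^ k)%:R :> R.
Proof.
move=> H; rewrite (eq_bigr (fun _ => 2)); last by move=> t _; rewrite H.
by rewrite prodr_const card_ord natrX.
Qed.

Lemma prod_if_ex k (h : nat -> bool) t0 : (t0 < k)%N -> h t0 ->
  \prod_(t < k) (if h t then 0 else 2) = 0 :> R.
Proof.
move=> lt H; rewrite (bigD1 (Ordinal lt)) //= H mul0r //.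
Qed.

Definition w1 k (a x : nat) : R := \prod_(t < k) (-1) ^+ (bit x (k.-1 - t) && bit a t).

Lemma sign_mul (c a b : bool) : (-1) ^+ (c && a) * (-1) ^+ (c && b) = (-1) ^+ (c && (a (+) b)) :> R.
Proof. by case: a; case: b; case: c; rewrite /= ?expr0 ?expr1 ?mulr1 ?mul1r ?mulrNN ?mulr1. Qed.

Lemma sign_mul' (c a b : bool) : (-1) ^+ (a && c) * (-1) ^+ (b && c) = (-1) ^+ ((a (+) b) && c) :> R.
Proof. by case: a; case: b; case: c; rewrite /= ?expr0 ?expr1 ?mulr1 ?mul1r ?mulrNN ?mulr1. Qed.

Lemma OR1 k a b : (a < 2 ^ k)%N -> (b < 2 ^ k)%N ->
  \sum_(x < 2 ^ k) w1 k a x * w1 k b x = if a == b then (2 ^ k)%:R else 0.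
Proof.
move=> ha hb; rewrite /w1.
under eq_bigr do rewrite -big_split /=.
under eq_bigr do under eq_bigr do rewrite sign_mul.
rewrite (L1r k (fun t => bit a t (+) bit b t)).
case: eqP => [->|ne].
  by apply: (prod_if_all (h := fun t => bit b t (+) bit b t)) => t _; rewrite addbb.
have /existsP [t bt] : [exists t : 'I_k, bit a t != bit b t].
  apply: contraT => /existsPn H; case: ne; apply: (bits_eq ha hb) => t tk.
  by move: (H (Ordinal tk)); rewrite negbK => /eqP.
by apply: (prod_if_ex (h := fun t => bit a t (+) bit b t) (ltn_ord t)); rewrite /= -negb_eqb.
Qed.

Lemma OC1 k x y : (x < 2 ^ k)%N -> (y < 2 ^ k)%N ->
  \sum_(a < 2 ^ k) w1 k a x * w1 k a y = if x == y then (2 ^ k)%:R else 0.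
Proof.
move=> hx hy; rewrite /w1.
under eq_bigr do rewrite -big_split /=.
under eq_bigr do under eq_bigr do rewrite sign_mul'.
rewrite (L1f k (fun t => bit x (k.-1 - t) (+) bit y (k.-1 - t))).
case: eqP => [->|ne].
  by apply: (prod_if_all (h := fun t => bit y (k.-1 - t) (+) bit y (k.-1 - t))) => t _; rewrite addbb.
have /existsP [u bu] : [exists t : 'I_k, bit x t != bit y t].
  apply: contraT => /existsPn H; case: ne; apply: (bits_eq hx hy) => t tk.
  by move: (H (Ordinal tk)); rewrite negbK => /eqP.
have uk := ltn_ord u.
have tk : (k.-1 - u < k)%N by lia.
apply: (prod_if_ex (h := fun t => bit x (k.-1 - t) (+) bit y (k.-1 - t)) tk); rewrite /= (_ : k.-1 - (k.-1 - u) = u)%N; last by lia.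
by rewrite -negb_eqb.
Qed.


Lemma sum_ffun_prod k (F : 'I_d -> nat -> R) :
  \sum_(m : Ix k) \prod_l F l (mv m l) = \prod_l \sum_(x < 2 ^ k) F l x.
Proof. by rewrite (bigA_distr_bigA (fun l (x : 'I_(2 ^ k)) => F l x)). Qed.

Lemma prod_ifeq k (n n' : Ix k) (c : R) :
  \prod_l (if mv n l == mv n' l then c else 0) = if n == n' then c ^+ d else 0.
Proof.
case: eqP => [->|ne].
  by rewrite (eq_bigr (fun _ => c)) ?prodr_const ?card_ord // => l _; rewrite eqxx.
have /existsP [l hl] : [exists l, n l != n' l].
  apply: contraT => /existsPn H; case: ne; apply/ffunP => l.
  by move: (H l); rewrite negbK => /eqP.
by rewrite (bigD1 l) //= ifN ?mul0r.
Qed.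

Lemma OR k (n n' : Ix k) :
  \sum_(m : Ix k) walshk R k (mv n) (mv m) * walshk R k (mv n') (mv m)
  = if n == n' then ((2 ^ k) ^ d)%:R else 0.
Proof.
rewrite (eq_bigr (fun m => \prod_l (w1 k (mv n l) (mv m l) * w1 k (mv n' l) (mv m l)))); last first.
  by move=> m _; rewrite big_split.
rewrite (sum_ffun_prod k (fun l x => w1 k (mv n l) x * w1 k (mv n' l) x)).
rewrite (eq_bigr (fun l => if mv n l == mv n' l then (2 ^ k)%:R else 0)); last first.
  by move=> l _; rewrite OR1 //; exact: mv_valid.
by rewrite prod_ifeq -natrX.
Qed.

Lemma OC k (m m' : Ix k) :
  \sum_(n : Ix k) walshk R k (mv n) (mv m) * walshk R k (mv n) (mv m')
  = if m == m' then ((2 ^ k) ^ d)%:R else 0.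
Proof.
rewrite (eq_bigr (fun n => \prod_l (w1 k (mv n l) (mv m l) * w1 k (mv n l) (mv m' l)))); last first.
  by move=> n _; rewrite big_split.
rewrite (sum_ffun_prod k (fun l a => w1 k a (mv m l) * w1 k a (mv m' l))).
rewrite (eq_bigr (fun l => if mv m l == mv m' l then (2 ^ k)%:R else 0)); last first.
  by move=> l _; rewrite OC1 //; exact: mv_valid.
by rewrite prod_ifeq -natrX.
Qed.

End Ring.

Section Psi.
Variables (R : realType) (d : nat) (psi : mindex d -> R).

Definition pk k : R := ((2 ^ k) ^ d)%:R.

Lemma pk_neq0 k : pk k != 0.
Proof. by rewrite /pk pnatr_eq0 -lt0n !expn_gt0. Qed.

Lemma pk_gt0 k : 0 < pk k.
Proof. by rewrite /pk ltr0n !expn_gt0. Qed.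

Definition psk k (m : mindex d) : R :=
  (pk k)^-1 * \sum_(n : Ix d k) psi (mv n) * walshk R k (mv n) m.

Lemma sum_pick k (n : Ix d k) (F : Ix d k -> R) :
  \sum_(n' : Ix d k) F n' * (if n == n' then pk k else 0) = F n * pk k.
Proof.
rewrite (bigD1 n) //= eqxx big1 ?addr0 // => n' /negbTE.
by rewrite eq_sym => ->; rewrite mulr0.
Qed.

Lemma INV k (n : Ix d k) :
  psi (mv n) = \sum_(m : Ix d k) walshk R k (mv n) (mv m) * psk k (mv m).
Proof.
transitivity ((pk k)^-1 * \sum_(n' : Ix d k) psi (mv n') *
   \sum_(m : Ix d k) (walshk R k (mv n) (mv m) * walshk R k (mv n') (mv m))).
  under eq_bigr do rewrite OR.
  by rewrite sum_pick [_ * pk k]mulrC mulKf ?pk_neq0.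
rewrite /psk.
under [RHS]eq_bigr do rewrite mulrCA mulr_sumr.
rewrite -mulr_sumr; congr (_ * _).
rewrite exchange_big /=; apply: eq_bigr => n' _.
rewrite mulr_sumr; apply: eq_bigr => m _; rewrite /=; ring.
Qed.

Lemma INJ k (f g : Ix d k -> R) :
  (forall n : Ix d k, \sum_(m : Ix d k) walshk R k (mv n) (mv m) * f m =
                      \sum_(m : Ix d k) walshk R k (mv n) (mv m) * g m) ->
  forall m, f m = g m.
Proof.
have rec : forall (h : Ix d k -> R) m0, h m0 = (pk k)^-1 * \sum_(n : Ix d k)
   walshk R k (mv n) (mv m0) * \sum_(m : Ix d k) walshk R k (mv n) (mv m) * h m.
  move=> h m0.
  transitivity ((pk k)^-1 * \sum_(m : Ix d k) h m *
     \sum_(n : Ix d k) (walshk R k (mv n) (mv m0) * walshk R k (mv n) (mv m))).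
    under eq_bigr do rewrite OC.
    by rewrite sum_pick [_ * pk k]mulrC mulKf ?pk_neq0.
  congr (_ * _).
  under [RHS]eq_bigr do rewrite mulr_sumr.
  rewrite exchange_big /=; apply: eq_bigr => m _.
  rewrite mulr_sumr; apply: eq_bigr => n _; ring.
move=> H m; rewrite (rec f) (rec g); congr (_ * _); apply: eq_bigr => n _.
by rewrite H.
Qed.

Lemma walshk_lift k (n m : mindex d) (s : 'I_d -> bool) : (forall l, n l < 2 ^ k)%N ->
  walshk R k.+1 n (fun l => 2 * m l + s l)%N = walshk R k n m.
Proof.
move=> hn; rewrite walshk_child big1 ?mulr1 // => l _.
by rewrite bit_small ?andbF.
Qed.

Lemma MART k (m : mindex d) : valid_index k m ->
  psk k m = \sum_(s : {ffun 'I_d -> bool}) psk k.+1 (ch m s).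
Proof.
move=> v; rewrite -(mv_ofm v).
pose f := fun m0 : Ix d k => psk k (mv m0).
pose g := fun m0 : Ix d k => \sum_(s : {ffun 'I_d -> bool}) psk k.+1 (ch (mv m0) s).
apply: (@INJ k f g) => n.
rewrite /f -INV /g.
transitivity (\sum_(m0 : Ix d k) \sum_(s : {ffun 'I_d -> bool})
   walshk R k.+1 (mv n) (ch (mv m0) s) * psk k.+1 (ch (mv m0) s)); last first.
  apply: eq_bigr => m0 _; rewrite mulr_sumr; apply: eq_bigr => s _.
  by rewrite /ch walshk_lift //; exact: mv_valid.
rewrite -(sum_child k (fun m1 => walshk R k.+1 (mv n) m1 * psk k.+1 m1)).
have vn : valid_index k.+1 (mv n).
  by move=> l; apply: (leq_trans (mv_valid n l)); rewrite leq_exp2l.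
by rewrite -[in RHS](mv_ofm vn) -INV mv_ofm.
Qed.

End Psi.

Lemma mseq_ge s : (s <= mseq s)%N.
Proof. elim: s => //= s IH; lia. Qed.

Lemma mseq_ltS s : (mseq s < mseq s.+1)%N.
Proof. rewrite /=; lia. Qed.

Lemma mseq_lt s s' : (s < s')%N -> (mseq s < mseq s')%N.
Proof.
elim: s' => // s' IH; rewrite ltnS leq_eqVlt => /orP[/eqP->|h].
  exact: mseq_ltS.
exact: (ltn_trans (IH h) (mseq_ltS s')).
Qed.

Lemma mseq_inj s s' : mseq s = mseq s' -> s = s'.
Proof.
move=> e; case: (ltngtP s s') => // h.
  by have := mseq_lt h; rewrite e ltnn.
by have := mseq_lt h; rewrite e ltnn.
Qed.

Lemma sign_sq_opp (R : realType) (a b : R) : a ^+ 2 = 1 -> b ^+ 2 = 1 -> a != b -> - a = b.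
Proof.
move=> ha hb ne.
have : (a - b) * (a + b) = 0 by rewrite mulrDr !mulrBl -!expr2 ha hb; ring.
move/eqP; rewrite mulf_eq0 subr_eq0 (negbTE ne) /= addr_eq0 => /eqP ->.
by rewrite opprK.
Qed.

Section FF.
Variables (R : realType) (d : nat).

Definition Vs s (m : mindex d) : R :=
  walshk R (mseq s) (fun l => m l %/ 2 ^ mseq s)%N (fun l => m l %% 2 ^ mseq s)%N.

Definition Pb s (g : point d) : bool :=
  rademacher R (2 * mseq s) g == Vs s (idx (2 * mseq s) g).

Lemma Vs_sq s m : Vs s m ^+ 2 = 1.
Proof. exact: walshk_sq. Qed.

Lemma setFs_P s g : setFs R s g <-> Pb s g.
Proof.
set M := mseq s.
have e2 : (2 ^ (2 * M) = 2 ^ M * 2 ^ M)%N by rewrite mul2n -addnn expnD.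
have pM := pow2_gt0 M.
split.
  case=> [m [m' [vm [vm' [c e]]]]].
  have v : valid_index (2 * M) (fun l => 2 ^ M * m l + m' l)%N.
    move=> l; rewrite e2; have := vm l; have := vm' l; move: (2 ^ M)%N => X; nia.
  have u := in_cube_uniq v c.
  apply/eqP; rewrite e /Vs; congr walshk.
    apply: functional_extensionality => l; rewrite -u mulnC divnMDl // divn_small ?addn0 //.
  apply: functional_extensionality => l; rewrite -u mulnC modnMDl modn_small //.
move=> /eqP P.
exists (fun l => idx (2 * M) g l %/ 2 ^ M)%N, (fun l => idx (2 * M) g l %% 2 ^ M)%N.
split; first by move=> l; rewrite ltn_divLR // -e2; exact: idx_valid.
split; first by move=> l; rewrite ltn_pmod.
split; last exact: P.
rewrite (_ : (fun l => _) = idx (2 * M) g); first exact: in_cube_idx.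
apply: functional_extensionality => l.
by rewrite mulnC -divn_eq.
Qed.

Lemma setF_P g : setF R g <-> forall s, Pb s g.
Proof. by split=> H s; apply/setFs_P; apply: H. Qed.

Lemma Pb_ext s g g' : (forall l t, (t <= 2 * mseq s)%N -> g l t = g' l t) ->
  Pb s g = Pb s g'.
Proof.
move=> H; rewrite /Pb !rademacherE (idx_ext (g' := g')); last first.
  by move=> l t ht; apply: H; apply: ltnW.
by congr (_ == _); apply: eq_bigr => l _; rewrite H.
Qed.

Lemma ONLYIF s k (m : mindex d) (sg : {ffun 'I_d -> bool}) :
  k = (2 * mseq s)%N -> valid_index k m ->
  meets (@setF R d) k.+1 (ch m sg) -> par R sg = Vs s m.
Proof.
move=> ek v [g [c Fg]].
have [c1 c2] := (in_cube_S _ _ _ _).1 c.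
have u := in_cube_uniq v c1.
have /setF_P /(_ s) /eqP P := Fg.
rewrite -ek rademacherE in P.
rewrite (_ : m = idx k g); last by apply: functional_extensionality.
by rewrite -P /par; apply: eq_bigr => l _; rewrite c2.
Qed.

End FF.

Section EXT.
Variables (R : realType) (d : nat).
Hypothesis d0 : (0 < d)%N.

Let i0 : 'I_d := Ordinal d0.

Definition flip p (g : point d) : point d :=
  fun l t => if (l == i0) && (t == p) then ~~ g l t else g l t.

Lemma flip_rad p g : rademacher R p (flip p g) = - rademacher R p g.
Proof.
rewrite !rademacherE (bigD1 i0) // [in RHS](bigD1 i0) //= /flip !eqxx /=.
rewrite -mulNr; congr (_ * _).
  by case: (g i0 p); rewrite /= ?expr0 ?expr1 ?opprK.
by apply: eq_bigr => l /negbTE ->.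
Qed.

Lemma flip_idx p g : idx p (flip p g) = idx p g.
Proof.
apply: idx_ext => l t ht; rewrite /flip.
by rewrite (ltn_eqF ht) andbF.
Qed.

Lemma Pb_flip j g : ~~ Pb R j g -> Pb R j (flip (2 * mseq j) g).
Proof.
rewrite /Pb flip_rad flip_idx => ne; apply/eqP.
apply: sign_sq_opp => //; [exact: rad_sq | exact: Vs_sq].
Qed.

Variable k : nat.
Variable h : point d.

Fixpoint rep (j : nat) : point d :=
  match j with
  | 0 => h
  | j'.+1 => let g := rep j' in
      if (k < 2 * mseq j')%N && ~~ Pb R j' g then flip (2 * mseq j') g else g
  end.

Definition hstar : point d := fun l t => rep t.+1 l t.

Lemma rep_low j l t : (t <= k)%N -> rep j l t = h l t.
Proof.
move=> tk; elim: j => //= j IH.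
case: ifP => // /andP[kj _]; rewrite /flip.
rewrite (_ : (t == 2 * mseq j) = false) ?andbF //.
by apply/negbTE; rewrite neq_ltn (leq_ltn_trans tk kj).
Qed.

Lemma rep_stab i j l t : (forall j', (j <= j' < j + i)%N -> 2 * mseq j' != t) ->
  rep (j + i) l t = rep j l t.
Proof.
elim: i => [|i IH] H; first by rewrite addn0.
rewrite addnS /=; case: ifP => _; last first.
  apply: IH => j' /andP[h1 h2]; apply: H; rewrite h1 /=; lia.
rewrite /flip.
have -> : (t == 2 * mseq (j + i)) = false.
  by apply/negbTE; rewrite eq_sym; apply: H; apply/andP; split; lia.
rewrite andbF; apply: IH => j' /andP[h1 h2]; apply: H; rewrite h1 /=; lia.
Qed.

Lemma rep_fix j : (k < 2 * mseq j)%N -> Pb R j (rep j.+1).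
Proof.
move=> kj /=; rewrite kj /=.
case: (boolP (Pb R j (rep j))) => /= P; first by [].
exact: Pb_flip.
Qed.

Lemma hstar_rep i l t : (t <= 2 * mseq i)%N -> hstar l t = rep i.+1 l t.
Proof.
move=> ti; rewrite /hstar.
case: (leqP t i) => hti.
  have e : (i.+1 = t.+1 + (i - t))%N by lia.
  rewrite e rep_stab // => j' /andP[h1 h2].
  move: (mseq_ge j') => hm; rewrite neq_ltn; apply/orP; right; lia.
have e : (t.+1 = i.+1 + (t - i))%N by lia.
rewrite e rep_stab // => j' /andP[h1 h2].
have : (i < j')%N by lia.
move/mseq_lt; rewrite neq_ltn => hm; apply/orP; right; lia.
Qed.

Lemma hstar_low l t : (t <= k)%N -> hstar l t = h l t.
Proof. by move=> tk; rewrite /hstar rep_low. Qed.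

Lemma hstar_F : (forall i, (2 * mseq i <= k)%N -> Pb R i h) -> setF R hstar.
Proof.
move=> H; apply/setF_P => i.
case: (leqP (2 * mseq i) k) => hi.
  rewrite (@Pb_ext R d i _ h); first exact: H.
  by move=> l t ht; apply: hstar_low; apply: leq_trans hi.
rewrite (@Pb_ext R d i _ (rep i.+1)); first exact: rep_fix.
by move=> l t ht; apply: hstar_rep.
Qed.

End EXT.

Lemma EXT (R : realType) d (d0 : (0 < d)%N) k (m : mindex d) (sg : {ffun 'I_d -> bool}) :
  valid_index k m -> meets (@setF R d) k m ->
  (forall s, k = (2 * mseq s)%N -> par R sg = Vs R s m) ->
  meets (@setF R d) k.+1 (ch m sg).
Proof.
move=> v [g [c Fg]] H.
pose h : point d := fun l t => if t == k then sg l else g l t.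
have hg : forall l t, (t < k)%N -> h l t = g l t.
  by move=> l t tk; rewrite /h (ltn_eqF tk).
have Ph : forall i, (2 * mseq i <= k)%N -> Pb R i h.
  move=> i; rewrite leq_eqVlt => /orP[/eqP e|lt].
    rewrite /Pb rademacherE e.
    rewrite (idx_ext (g' := g)); last by move=> l t tk; exact: hg.
    have u := in_cube_uniq v c.
    rewrite (_ : idx k g = m); last by apply: functional_extensionality => l; rewrite u.
    rewrite -(H i (esym e)) /par; apply/eqP; apply: eq_bigr => l _.
    by rewrite /h eqxx.
  rewrite (@Pb_ext R d i _ g).
    by have /setF_P := Fg; apply.
  by move=> l t ht; apply: hg; apply: leq_ltn_trans lt.
exists (hstar R d0 k h); split; last exact: hstar_F.
apply/in_cube_S; split.
  move=> l t tk; rewrite hstar_low ?hg; [exact: c | exact: tk | exact: ltnW].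
by move=> l; rewrite hstar_low // /h eqxx.
Qed.

Section Tau.
Variables (R : realType) (d : nat) (tau : nat -> mindex d -> R).
Hypothesis d0 : (0 < d)%N.
Hypothesis HT : is_tau_E (@setF R d) tau.

Lemma mv0 (m : Ix d 0) : mv m = fun _ => 0%N.
Proof.
apply: functional_extensionality => l; have := mv_valid m l.
by rewrite expn0 ltnS leqn0 => /eqP.
Qed.

Lemma card_Ix0 : #|{: Ix d 0}| = 1%N.
Proof. by rewrite card_ffun card_ord expn0 exp1n. Qed.

Lemma tau_nz_meets k m : valid_index k m -> tau k m != 0 -> meets (@setF R d) k m.
Proof.
move: HT; rewrite /is_tau_E; case=> _ _ tz _ _ v nz.
case: (classic (meets (@setF R d) k m)) => // nm.
by move: nz; rewrite ((tz k m v).2 nm) eqxx.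
Qed.

Lemma meets_tau_nz k m : valid_index k m -> meets (@setF R d) k m -> tau k m != 0.
Proof.
move: HT; rewrite /is_tau_E; case=> _ _ tz _ _ v mt; apply/eqP => z.
by have := (tz k m v).1 z.
Qed.

Lemma meets_parent k m (s : {ffun 'I_d -> bool}) :
  meets (@setF R d) k.+1 (ch m s) -> meets (@setF R d) k m.
Proof.
by case=> g [c Fg]; exists g; split => //; have [] := (in_cube_S _ _ _ _).1 c.
Qed.

Lemma T_sum k : \sum_(m : Ix d k) tau k (mv m) = 1.
Proof.
move: HT; rewrite /is_tau_E; case=> t0 _ _ tsplit _.
elim: k => [|k IH].
  under eq_bigr do rewrite mv0 t0.
  by rewrite sumr_const card_Ix0.
rewrite sum_child -IH; apply: eq_bigr => m _.
by rewrite (tsplit k (mv m) (mv_valid m)).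
Qed.

Definition TH k (n : mindex d) : R :=
  \sum_(m : Ix d k) walshk R k n (mv m) * tau k (mv m).

Lemma TH_S k n : (forall l, n l < 2 ^ k)%N -> TH k.+1 n = TH k n.
Proof.
move: HT; rewrite /is_tau_E; case=> _ _ _ tsplit _ hn.
rewrite /TH (sum_child k (fun m => walshk R k.+1 n m * tau k.+1 m)).
apply: eq_bigr => m _; rewrite (tsplit k (mv m) (mv_valid m)) mulr_sumr.
by apply: eq_bigr => s _; rewrite /ch walshk_lift.
Qed.

Lemma TH_mono k j n : (forall l, n l < 2 ^ k)%N -> TH (k + j) n = TH k n.
Proof.
move=> hn; elim: j => [|j IH]; first by rewrite addn0.
rewrite addnS TH_S // => l; apply: (leq_trans (hn l)); rewrite leq_exp2l //; lia.
Qed.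

Lemma tauhat_TH K n : (forall l, n l < 2 ^ K)%N -> tauhat tau n = TH K n.
Proof.
move=> hK.
set k0 := (\max_(j < d) n j)%N.
have h0 : forall l, (n l < 2 ^ k0)%N.
  move=> l; apply: (leq_trans (ltn_expl (n l) (isT : (1 < 2)%N))).
  by rewrite leq_exp2l // /k0; exact: leq_bigmax.
have h1 : forall l, (n l < 2 ^ minn K k0)%N.
  by move=> l; rewrite /minn; case: ifP => _; [exact: hK | exact: h0].
have -> : tauhat tau n = TH k0 n by [].
rewrite -(subnK (geq_minr K k0)) addnC TH_mono //.
by rewrite -[in RHS](subnK (geq_minl K k0)) addnC TH_mono.
Qed.

Lemma decomp k (m : Ix d k.+1) : exists p : Ix d k, exists s, mv m = ch (mv p) s.
Proof.
exists (ofm k (fun l => mv m l %/ 2)%N), [ffun l => odd (mv m l)].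
rewrite mv_ofm; last by move=> l; rewrite ltn_divLR // -expnSr; exact: mv_valid.
apply: functional_extensionality => l; rewrite /ch ffunE.
by rewrite [in LHS](divn_eq (mv m l) 2) modn2 mulnC.
Qed.

Let i0 : 'I_d := Ordinal d0.

Definition fs (s : {ffun 'I_d -> bool}) : {ffun 'I_d -> bool} :=
  [ffun l => if l == i0 then ~~ s l else s l].

Lemma fs_inv : involutive fs.
Proof. by move=> s; apply/ffunP => l; rewrite !ffunE; case: eqP => //; rewrite negbK. Qed.

Lemma par_fs s : par R (fs s) = - par R s.
Proof.
rewrite /par (bigD1 i0) // [in RHS](bigD1 i0) //= !ffunE eqxx -mulNr; congr (_ * _).
  by case: (s i0); rewrite /= ?expr0 ?expr1 ?opprK.
by apply: eq_bigr => l /negbTE ne; rewrite ffunE ne.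
Qed.

Lemma card_par v : v ^+ 2 = 1 ->
  #|[set s : {ffun 'I_d -> bool} | par R s == v]| = #|[set s : {ffun 'I_d -> bool} | par R s == 1]|.
Proof.
move/eqP; rewrite sqrf_eq1 => /orP[/eqP->//|/eqP->].
rewrite -(card_imset _ (inv_inj fs_inv)).
apply: eq_card => s; rewrite inE.
apply/imsetP/idP.
  by case=> s' /[!inE] /eqP p ->; rewrite par_fs p opprK.
move=> /eqP p; exists (fs s); first by rewrite inE par_fs p.
by rewrite fs_inv.
Qed.

Lemma CNT k : exists N : nat, forall m : Ix d k, meets (@setF R d) k (mv m) ->
  #|[set s : {ffun 'I_d -> bool} | tau k.+1 (ch (mv m) s) != 0]| = N.
Proof.
have chv : forall (m : Ix d k) s, valid_index k.+1 (ch (mv m) s).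
  by move=> m s; apply: ch_valid; exact: mv_valid.
case: (classic (exists s0, k = (2 * mseq s0)%N)) => [[s0 e]|ne].
  exists #|[set s : {ffun 'I_d -> bool} | par R s == 1]| => m mt.
  rewrite -(card_par (Vs_sq R s0 (mv m))); apply: eq_card => s; rewrite !inE.
  apply/idP/idP.
    by move/(tau_nz_meets (chv m s))/(ONLYIF e (mv_valid m))/eqP.
  move/eqP => p; apply: meets_tau_nz (chv m s) _.
  apply: (EXT d0 (mv_valid m) mt) => s1 e1.
  by have -> : s1 = s0 by apply: mseq_inj; lia.
exists #|{: {ffun 'I_d -> bool}}| => m mt.
apply: eq_card => s; rewrite !inE; apply: meets_tau_nz (chv m s) _.
apply: (EXT d0 (mv_valid m) mt) => s1 e1; case: ne; by exists s1.
Qed.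

Lemma STRUCT k : exists c : R, forall m : Ix d k, tau k (mv m) = 0 \/ tau k (mv m) = c.
Proof.
move: HT; rewrite /is_tau_E; case=> t0 tpos tz tsplit teq.
elim: k => [|k [c IH]].
  by exists 1 => m; right; rewrite mv0.
have [N HN] := CNT k.
exists (c / N%:R) => m''.
have [p [s e]] := decomp m''; rewrite e.
have vp := mv_valid p.
have vc : forall s', valid_index k.+1 (ch (mv p) s') by move=> s'; apply: ch_valid.
case: (IH p) => cp.
  left; apply/eqP; apply: contraT => nz.
  have := meets_tau_nz vp (meets_parent (tau_nz_meets (vc s) nz)).
  by rewrite cp eqxx.
case: (eqVneq (tau k.+1 (ch (mv p) s)) 0) => [->|nz]; first by left.
right.
have mp : meets (@setF R d) k (mv p) := meets_parent (tau_nz_meets (vc s) nz).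
have sp := tsplit k (mv p) vp.
rewrite (bigID (fun s' => tau k.+1 (ch (mv p) s') != 0)) /= in sp.
rewrite [X in _ + X]big1 ?addr0 in sp; last by move=> s' /negPn/eqP.
rewrite (eq_bigr (fun _ => tau k.+1 (ch (mv p) s))) in sp; last first.
  move=> s' nz'; apply: (teq k (mv p) s' s vp); [exact: (tau_nz_meets (vc s') nz') | exact: (tau_nz_meets (vc s) nz)].
rewrite sumr_const in sp.
have cnt : #|[pred s' : {ffun 'I_d -> bool} | tau k.+1 (ch (mv p) s') != 0]| = N.
  by rewrite -(HN p mp); apply: eq_card => s'; rewrite inE.
rewrite cnt cp in sp.
have Nnz : N%:R != 0 :> R.
  apply: contraTneq (meets_tau_nz vp mp) => N0.
  by rewrite cp sp -mulr_natr N0 mulr0 eqxx.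
by rewrite sp -(mulr_natr (tau k.+1 (ch (mv p) s))) mulfK.
Qed.

End Tau.

Section Supp.
Variables (R : realType) (d : nat) (psi : mindex d -> R).
Hypothesis d0 : (0 < d)%N.
Hypothesis HC : forall g : point d, ~ setF R g -> forall e : R, 0 < e ->
  exists k0 : nat, forall k, (k0 <= k)%N -> `|pk R d k * psk psi k (idx k g)| < e.

Let s0 : {ffun 'I_d -> bool} := [ffun _ => false].

Definition nxt k (m : mindex d) : {ffun 'I_d -> bool} :=
  [arg max_(s > s0) `|psk psi k.+1 (ch m s)| ]%O.

Lemma pkS k : pk R d k.+1 = pk R d k * (2 ^ d)%:R.
Proof. by rewrite /pk -natrM; congr _%:R; rewrite expnS expnMn mulnC. Qed.

Lemma card_sig : #|{: {ffun 'I_d -> bool}}| = (2 ^ d)%N.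
Proof. by rewrite card_ffun card_bool card_ord. Qed.

Lemma nxt_prop k m : valid_index k m ->
  pk R d k * `|psk psi k m| <= pk R d k.+1 * `|psk psi k.+1 (ch m (nxt k m))|.
Proof.
move=> v.
have H : forall s, `|psk psi k.+1 (ch m s)| <= `|psk psi k.+1 (ch m (nxt k m))|.
  rewrite /nxt; case: Order.TotalTheory.arg_maxP => // i _ Hi s; exact: Hi.
rewrite pkS -mulrA ler_pM2l ?pk_gt0 // (MART psi v).
apply: (le_trans (ler_norm_sum _ _ _)).
rewrite (eq_bigr (fun s => `|psk psi k.+1 (ch m s)|)) //.
apply: (le_trans (ler_sum _ (fun s _ => H s))).
by rewrite sumr_const card_sig mulr_natl.
Qed.

Variable k0 : nat.
Variable m0 : mindex d.

Fixpoint sq (j : nat) : mindex d :=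
  match j with 0 => m0 | j'.+1 => ch (sq j') (nxt (k0 + j') (sq j')) end.

Definition gpt : point d := fun l t =>
  if (t < k0)%N then bit (m0 l) (k0.-1 - t) else nxt t (sq (t - k0)) l.

Hypothesis vm0 : valid_index k0 m0.

Lemma sq_valid j : valid_index (k0 + j) (sq j).
Proof. elim: j => [|j IH] /=; first by rewrite addn0. rewrite addnS; exact: ch_valid. Qed.

Lemma sq_bound j : pk R d k0 * `|psk psi k0 m0| <= pk R d (k0 + j) * `|psk psi (k0 + j) (sq j)|.
Proof.
elim: j => [|j IH] /=; first by rewrite addn0.
apply: (le_trans IH); rewrite addnS; exact: nxt_prop (sq_valid j).
Qed.

Lemma gpt_cube j : in_cube (k0 + j) (sq j) gpt.
Proof.
elim: j => [|j IH] /=.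
  by rewrite addn0 => l t tk; rewrite /gpt tk.
rewrite addnS; apply/in_cube_S; split => // l.
rewrite /gpt ltnNge leq_addr /= (_ : k0 + j - k0 = j)%N //; lia.
Qed.

Lemma SUPP : ~ meets (@setF R d) k0 m0 -> psk psi k0 m0 = 0.
Proof.
move=> nm; apply/eqP; apply: contraT => nz.
have nF : ~ setF R gpt.
  move=> F; apply: nm; exists gpt; split => //.
  by have := @gpt_cube 0%N; rewrite addn0.
have cpos : 0 < pk R d k0 * `|psk psi k0 m0| by rewrite mulr_gt0 ?pk_gt0 ?normr_gt0.
have [K HK] := HC nF cpos.
have := HK (k0 + K)%N (leq_addl _ _).
have -> : idx (k0 + K) gpt = sq K.
  apply: functional_extensionality => l; symmetry.
  exact: (in_cube_uniq (@sq_valid K) (@gpt_cube K)).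
rewrite normrM (gtr0_norm (pk_gt0 _ _ _)) => lt.
have := @sq_bound K; by rewrite leNgt lt.
Qed.

End Supp.

Section Main1.
Variables (R : realType) (d : nat) (psi : mindex d -> R).
Hypothesis d0 : (0 < d)%N.

Lemma maxeq k (N : mindex d) : (forall j, N j = 2 ^ k)%N -> (\max_(j < d) N j = 2 ^ k)%N.
Proof.
move=> hN; apply/eqP; rewrite eqn_leq; apply/andP; split.
  by apply/bigmax_leqP => j _; rewrite hN.
by rewrite -(hN (Ordinal d0)); exact: leq_bigmax.
Qed.

Lemma psum_gen k X (e : (X = 2 ^ k)%N) (F : mindex d -> R) (N : mindex d) :
  (forall j, N j = 2 ^ k)%N ->
  \sum_(n : {ffun 'I_d -> 'I_X} | [forall j, (n j < N j)%N]) F (fun l => nat_of_ord (n l))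
  = \sum_(n : Ix d k) F (mv n).
Proof.
move=> hN; subst X; apply: eq_big => // n.
by apply/forallP => j; rewrite hN ltn_ord.
Qed.

Lemma PSUM k (g : point d) :
  psum psi (fun _ => 2 ^ k)%N g = pk R d k * psk psi k (idx k g).
Proof.
have hN : forall j : 'I_d, ((fun _ : 'I_d => 2 ^ k) j = 2 ^ k)%N by [].
rewrite /psum (psum_gen (maxeq hN) (fun n => psi n * walsh R n g) hN).
rewrite /psk mulVKf ?pk_neq0 //; apply: eq_bigr => n _.
by rewrite (@walsh_walshk R d k) //; exact: mv_valid.
Qed.

End Main1.

Section Main2.
Variables (R : realType) (d : nat).
Hypothesis d0 : (0 < d)%N.

Definition upv K (n : Ix d K) : mindex d := fun l => (mv n l + 2 ^ K)%N.

Lemma upv_valid K (n : Ix d K) : valid_index K.+1 (upv n).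
Proof. move=> l; rewrite /upv expnS; have := mv_valid n l; lia. Qed.

Lemma walshk_up K (n : Ix d K) m : walshk R K (upv n) m = walshk R K (mv n) m.
Proof.
rewrite /walshk; apply: eq_bigr => l _; apply: eq_bigr => t _.
rewrite /upv bit_add_pow ?(ltn_eqF (ltn_ord t)) //; [exact: mv_valid | exact: ltnW].
Qed.

Lemma par_up K (n : Ix d K) (sg : {ffun 'I_d -> bool}) :
  \prod_l (-1) ^+ (sg l && bit (upv n l) K) = par R sg.
Proof.
apply: eq_bigr => l _; rewrite /upv bit_add_pow ?eqxx ?andbT //; exact: mv_valid.
Qed.

Lemma UPG (q : nat -> mindex d -> R) s K (eK : K = (2 * mseq s)%N) (n : Ix d K) :
  (forall m : Ix d K, q K (mv m) = \sum_(sg : {ffun 'I_d -> bool}) q K.+1 (ch (mv m) sg)) ->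
  (forall (m : Ix d K) sg, q K.+1 (ch (mv m) sg) != 0 -> meets (@setF R d) K.+1 (ch (mv m) sg)) ->
  \sum_(m : Ix d K.+1) walshk R K.+1 (upv n) (mv m) * q K.+1 (mv m)
  = \sum_(m : Ix d K) walshk R K (mv n) (mv m) * (Vs R s (mv m) * q K (mv m)).
Proof.
move=> H1 H2.
rewrite (sum_child K (fun m => walshk R K.+1 (upv n) m * q K.+1 m)).
apply: eq_bigr => m _; rewrite H1 !mulr_sumr; apply: eq_bigr => sg _.
rewrite {1}/ch walshk_child walshk_up par_up -mulrA; congr (_ * _).
case: (eqVneq (q K.+1 (ch (mv m) sg)) 0) => [->|nz]; first by rewrite !mulr0.
by rewrite (ONLYIF eK (mv_valid m) (H2 m sg nz)).
Qed.

Lemma PARS K (a : Ix d K -> R) :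
  \sum_(n : Ix d K) (\sum_(m : Ix d K) walshk R K (mv n) (mv m) * a m) ^+ 2
  = pk R d K * \sum_(m : Ix d K) a m ^+ 2.
Proof.
have E1 : forall n : Ix d K, (\sum_(m : Ix d K) walshk R K (mv n) (mv m) * a m) ^+ 2
   = \sum_(m : Ix d K) \sum_(m' : Ix d K)
       (walshk R K (mv n) (mv m) * walshk R K (mv n) (mv m')) * (a m * a m').
  move=> n; rewrite expr2 mulr_suml; apply: eq_bigr => m _.
  rewrite mulr_sumr; apply: eq_bigr => m' _; ring.
rewrite (eq_bigr _ (fun n _ => E1 n)) exchange_big /=.
rewrite mulr_sumr; apply: eq_bigr => m _.
rewrite exchange_big /=.
rewrite (eq_bigr (fun m' => (if m == m' then pk R d K else 0) * (a m * a m'))); last first.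
  by move=> m' _; rewrite -mulr_suml OC.
rewrite (bigD1 m) //= eqxx big1 ?addr0; first by rewrite expr2.
by move=> m' /negbTE; rewrite eq_sym => ->; rewrite mul0r.
Qed.

End Main2.

Lemma sqr_normr (R : realType) (x : R) : `|x| ^+ 2 = x ^+ 2.
Proof. exact: real_normK (num_real x). Qed.

Theorem theorem3 (R : realType) (d : nat)
    (tau : nat -> mindex d -> R) (psi : mindex d -> R) :
  (2 <= d)%N ->
  is_tau_E (@setF R d) tau ->
  ((forall g : point d, ~ setF R g -> conv0_rect psi g) \/
   (forall g : point d, ~ setF R g -> conv0_cube psi g)) ->
  (exists eps : mindex d -> R, vanish_at_infty eps /\
     forall n, `|psi n| <= eps n * `|tauhat tau n|) ->
  forall n, psi n = 0.
Proof.
move=> d2 HT Hconv [eps [Hv Hb]] n0.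
have d0 : (0 < d)%N by lia.
have HC : forall g : point d, ~ setF R g -> forall e : R, 0 < e ->
    exists k0 : nat, forall k, (k0 <= k)%N -> `|pk R d k * psk psi k (idx k g)| < e.
  move=> g nF e e0; case: Hconv => H.
    have [M HM] := H g nF e e0; exists M => k hk; rewrite -PSUM //; apply: HM => j /=.
    by apply: (leq_trans hk); apply: ltnW; apply: ltn_expl.
  have [M HM] := H g nF e e0; exists M => k hk; rewrite -PSUM //; apply: HM.
  by apply: (leq_trans hk); apply: ltnW; apply: ltn_expl.
have SU : forall k (m : mindex d), valid_index k m -> ~ meets (@setF R d) k m -> psk psi k m = 0.
  by move=> k m v nm; exact: (SUPP d0 HC v nm).
have [tt0 tpos tz tsplit teq] := HT.
suff key : forall e : R, 0 < e -> `|psi n0| <= e.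
  apply/eqP; apply: contraT => nz.
  have hp : 0 < `|psi n0| / 2 by rewrite divr_gt0 ?normr_gt0.
  have := key _ hp; rewrite ler_pdivlMr // => h.
  have : `|psi n0| <= 0 by lra.
  by rewrite normr_le0 (negbTE nz).
move=> e e0.
have [M0 HM0] := Hv e e0.
set s := (M0 + \max_(l < d) n0 l)%N.
set K := (2 * mseq s)%N.
have sK : (s <= K)%N by have := mseq_ge s; rewrite /K; lia.
have n0K : forall l, (n0 l < 2 ^ K)%N.
  move=> l; apply: (leq_ltn_trans _ (ltn_expl K (isT : (1 < 2)%N))).
  apply: (leq_trans _ sK); rewrite /s; apply: (leq_trans _ (leq_addl _ _)); exact: leq_bigmax.
have M0K : (M0 <= 2 ^ K)%N.
  apply: (leq_trans _ (ltnW (ltn_expl K (isT : (1 < 2)%N)))); apply: (leq_trans _ sK).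
  exact: leq_addr.
pose ps := fun m : Ix d K => psk psi K (mv m).
pose ta := fun m : Ix d K => tau K (mv m).
pose V := fun m : Ix d K => Vs R s (mv m).
have F1 : forall n : Ix d K, psi (upv n) = \sum_(m : Ix d K) walshk R K (mv n) (mv m) * (V m * ps m).
  move=> n; have := INV psi (ofm K.+1 (upv n)); rewrite mv_ofm; last exact: upv_valid.
  move=> ->.
  apply: (UPG (q := psk psi) (s := s) erefl n).
    by move=> m; exact: MART (mv_valid m).
  move=> m sg nz; apply: NNPP => nm; move: nz; rewrite SU ?eqxx //.
  by apply: ch_valid; exact: mv_valid.
have F2 : forall n : Ix d K, tauhat tau (upv n) = \sum_(m : Ix d K) walshk R K (mv n) (mv m) * (V m * ta m).
  move=> n; rewrite (tauhat_TH d0 HT (K := K.+1)); last exact: upv_valid.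
  rewrite /TH; apply: (UPG (q := tau) (s := s) erefl n).
    by move=> m; exact: tsplit (mv_valid m).
  move=> m sg nz.
  have v : valid_index K.+1 (ch (mv m) sg) by apply: ch_valid; exact: mv_valid.
  exact: (tau_nz_meets HT v nz).
have F3 : forall n : Ix d K, psi (upv n) ^+ 2 <= e ^+ 2 * tauhat tau (upv n) ^+ 2.
  move=> n; have hb := Hb (upv n).
  have he : `|eps (upv n)| < e.
    apply: HM0; apply: (leq_trans M0K); apply: (@leq_trans (upv n (Ordinal d0))).
      by rewrite /upv leq_addl.
    exact: leq_bigmax.
  have h1 : eps (upv n) <= `|eps (upv n)| by exact: ler_norm.
  have h2 : 0 <= `|tauhat tau (upv n)| by [].
  have h3 : 0 <= `|psi (upv n)| by [].
  have h4 : `|psi (upv n)| <= e * `|tauhat tau (upv n)|.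
    apply: (le_trans hb); apply: ler_wpM2r => //; lra.
  rewrite -[psi _ ^+ 2]sqr_normr -[tauhat _ _ ^+ 2]sqr_normr -exprMn.
  by rewrite ler_sqr // ?nnegrE // mulr_ge0 // ltW.
have Vsq : forall m, V m ^+ 2 = 1 by move=> m; exact: Vs_sq.
set A := \sum_(m : Ix d K) ps m ^+ 2.
set B := \sum_(m : Ix d K) ta m ^+ 2.
have AB : A <= e ^+ 2 * B.
  have pkp := pk_gt0 R d K.
  rewrite -(ler_pM2l pkp) mulrCA.
  have EA : pk R d K * A = \sum_(n : Ix d K) psi (upv n) ^+ 2.
    rewrite (eq_bigr _ (fun n _ => congr1 (fun x => x ^+ 2) (F1 n))) PARS /A.
    by congr (_ * _); apply: eq_bigr => m _; rewrite [(V m * _) ^+ 2]exprMn Vsq mul1r.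
  have EB : pk R d K * B = \sum_(n : Ix d K) tauhat tau (upv n) ^+ 2.
    rewrite (eq_bigr _ (fun n _ => congr1 (fun x => x ^+ 2) (F2 n))) PARS /B.
    by congr (_ * _); apply: eq_bigr => m _; rewrite [(V m * _) ^+ 2]exprMn Vsq mul1r.
  rewrite EA EB mulr_sumr; apply: ler_sum => n _; exact: F3.
have F5 : `|psi n0| <= \sum_(m : Ix d K) `|ps m|.
  rewrite -(mv_ofm (k := K) (m := n0)) // INV.
  apply: (le_trans (ler_norm_sum _ _ _)); apply: ler_sum => m _.
  by rewrite normrM walshk_norm mul1r.
have F6 : \sum_(m : Ix d K) ta m = 1 by exact: T_sum.
have F7 : forall m, ta m = 0 -> ps m = 0.
  move=> m z; apply: SU; first exact: mv_valid.
  exact: (tz K (mv m) (mv_valid m)).1 z.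
have F8 : forall m, 0 <= ta m by move=> m; exact: tpos (mv_valid m).
have [c Hc] := STRUCT d0 HT K.
have cpos : 0 < c.
  have [m nz] : exists m, ta m != 0.
    apply: NNPP => H; move: F6; rewrite big1 => [/eqP|m _]; first by rewrite eq_sym oner_eq0.
    by apply/eqP; apply: contraT => nz; case: H; exists m.
  case: (Hc m) => hm; first by move: nz; rewrite /ta hm eqxx.
  by rewrite -hm lt0r nz F8.
have EB : B = c.
  rewrite /B -[c]mulr1 -F6 mulr_sumr; apply: eq_bigr => m _.
  by case: (Hc m) => hm; rewrite /ta hm expr2 ?mulr0.
have key : forall m, c * `|ps m| = ta m * `|ps m|.
  move=> m; case: (Hc m) => hm; last by rewrite /ta hm.
  by rewrite F7 // normr0 !mulr0.
have ineq : forall m, 2 * e * (ta m * `|ps m|) <= e ^+ 2 * ta m ^+ 2 + ps m ^+ 2.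
  move=> m; rewrite -[ps m ^+ 2]sqr_normr.
  have : 0 <= (e * ta m - `|ps m|) ^+ 2 by exact: sqr_ge0.
  lra.
have S1 : 2 * e * c * \sum_(m : Ix d K) `|ps m| <= e ^+ 2 * B + A.
  rewrite /A /B mulr_sumr [in X in X + _]mulr_sumr -big_split /=.
  apply: ler_sum => m _; rewrite -mulrA key; exact: ineq.
have S2 : \sum_(m : Ix d K) `|ps m| <= e.
  rewrite EB in S1 AB.
  have hc : 0 < 2 * e * c by rewrite !mulr_gt0.
  rewrite -(ler_pM2l hc).
  nra.
exact: le_trans F5 S2.
Qed.
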